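(* Let $\mathscr{H}$ be a complex Hilbert space and let $N(\cdot)$ be a norm on $\mathbb{B}(\mathscr{H})$ which is an algebra norm ($N(XY)\leq N(X)N(Y)$ for all $X,Y$) and self-adjoint ($N(X^* )=N(X)$ for all $X$). Then for every $T\in\mathbb{B}(\mathscr{H})$, $$\frac1{16}N(T^*T+TT^* )+\frac12 w_N(T)\,|N(\Re T)-N(\Im T)|\leq w_N^2(T).$$
   Context: For $T\in\mathbb{B}(\mathscr{H})$: $\Re(T)=\frac12(T+T^* )$, $\Im(T)=\frac1{2i}(T-T^* )$, and $w_N(T)=\sup_{\theta\in\mathbb{R}}N(\Re(e^{i\theta}T))$. *)

(* Defs.v *)
From Stdlib Require Import ClassicalEpsilon.
From mathcomp Require Import all_boot all_order all_algebra.
From mathcomp Require Import boolp classical_sets reals trigo.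
From mathcomp Require Import complex.

Set Implicit Arguments.
Unset Strict Implicit.
Unset Printing Implicit Defensive.

Import Order.TTheory GRing.Theory Num.Theory ComplexField.
Local Open Scope ring_scope.
Local Open Scope classical_set_scope.

Definition ipnorm (R : realType) (V : lmodType R[i]) (ip : V -> V -> R[i])
  (x : V) : R := Num.sqrt (complex.Re (ip x x)).

Definition is_inner_product (R : realType) (V : lmodType R[i])
  (ip : V -> V -> R[i]) : Prop :=
  [/\ (forall (a : R[i]) (x y z : V), ip (a *: x + y) z = a * ip x z + ip y z),
      (forall x y : V, ip y x = ((ip x y)^*)%C),
      (forall x : V, 0 <= complex.Re (ip x x)) &
      (forall x : V, ip x x = 0 -> x = 0)].

Definition ip_complete (R : realType) (V : lmodType R[i])
  (ip : V -> V -> R[i]) : Prop :=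
  forall u : nat -> V,
    (forall e : R, 0 < e -> exists n0 : nat, forall m n : nat,
        (n0 <= m)%N -> (n0 <= n)%N -> ipnorm ip (u m - u n) < e) ->
    exists l : V, forall e : R, 0 < e -> exists n0 : nat, forall n : nat,
        (n0 <= n)%N -> ipnorm ip (u n - l) < e.

Definition is_hilbert (R : realType) (V : lmodType R[i])
  (ip : V -> V -> R[i]) : Prop := is_inner_product ip /\ ip_complete ip.

Definition is_linear_op (R : realType) (V : lmodType R[i]) (X : V -> V) : Prop :=
  forall (a : R[i]) (x y : V), X (a *: x + y) = a *: X x + X y.

Definition is_bounded_op (R : realType) (V : lmodType R[i])
  (ip : V -> V -> R[i]) (X : V -> V) : Prop :=
  is_linear_op X /\ exists M : R, forall x : V, ipnorm ip (X x) <= M * ipnorm ip x.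

Definition opD (R : realType) (V : lmodType R[i]) (X Y : V -> V) : V -> V :=
  fun x => X x + Y x.
Definition opZ (R : realType) (V : lmodType R[i]) (c : R[i]) (X : V -> V)
  : V -> V := fun x => c *: X x.
Definition opM (R : realType) (V : lmodType R[i]) (X Y : V -> V) : V -> V :=
  fun x => X (Y x).

Definition is_adjoint (R : realType) (V : lmodType R[i])
  (ip : V -> V -> R[i]) (X S : V -> V) : Prop :=
  forall x y : V, ip (X x) y = ip x (S y).

(* The adjoint X^* (it exists and is unique for X in B(H), H Hilbert, by
   the Riesz representation theorem; we pick it by choice). *)
Definition adj (R : realType) (V : lmodType R[i]) (ip : V -> V -> R[i])
  (X : V -> V) : V -> V :=
  epsilon (inhabits (fun x : V => x)) (fun S => is_adjoint ip X S).

Definition ReOp (R : realType) (V : lmodType R[i]) (ip : V -> V -> R[i])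
  (T : V -> V) : V -> V := opZ (2%:R)^-1 (opD T (adj ip T)).
Definition ImOp (R : realType) (V : lmodType R[i]) (ip : V -> V -> R[i])
  (T : V -> V) : V -> V :=
  opZ (2%:R * 'i%C)^-1 (opD T (opZ (-1) (adj ip T))).

Definition expi (R : realType) (t : R) : R[i] := (cos t +i* sin t)%C.

Definition wN (R : realType) (V : lmodType R[i]) (ip : V -> V -> R[i])
  (N : (V -> V) -> R) (T : V -> V) : R :=
  sup [set N (ReOp ip (opZ (expi t) T)) | t in [set: R]].

Definition is_op_norm (R : realType) (V : lmodType R[i]) (ip : V -> V -> R[i])
  (N : (V -> V) -> R) : Prop :=
  [/\ (forall X, is_bounded_op ip X -> 0 <= N X),
      (forall X, is_bounded_op ip X -> N X = 0 -> X = (fun _ => 0)),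
      (forall (c : R[i]) X, is_bounded_op ip X -> N (opZ c X) = Normc.normc c * N X) &
      (forall X Y, is_bounded_op ip X -> is_bounded_op ip Y ->
         N (opD X Y) <= N X + N Y)].

Definition is_algebra_norm (R : realType) (V : lmodType R[i])
  (ip : V -> V -> R[i]) (N : (V -> V) -> R) : Prop :=
  forall X Y, is_bounded_op ip X -> is_bounded_op ip Y ->
    N (opM X Y) <= N X * N Y.

Definition is_selfadjoint_norm (R : realType) (V : lmodType R[i])
  (ip : V -> V -> R[i]) (N : (V -> V) -> R) : Prop :=
  forall X, is_bounded_op ip X -> N (adj ip X) = N X.

(* Main.v *)
From Stdlib Require Import ClassicalEpsilon.
Require Import Defs.
From mathcomp Require Import all_boot all_order all_algebra.
From mathcomp Require Import boolp classical_sets reals trigo.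
From mathcomp Require Import complex.
From mathcomp Require Import ring lra.
Import Order.TTheory GRing.Theory Num.Theory ComplexField.
Local Open Scope ring_scope.

Section IP.
Variable R : realType.
Variable V : lmodType R[i].
Variable ip : V -> V -> R[i].
Hypothesis Hip : is_inner_product ip.

Local Notation q x := (complex.Re (ip x x)).
Local Notation nn x := (ipnorm ip x).

Lemma ip0l y : ip 0 y = 0.
Proof.
case: Hip => lin _ _ _.
have := lin 1 0 0 y; rewrite scale1r addr0 mul1r => /eqP.
by rewrite -subr_eq0 opprD addrA subrr add0r oppr_eq0 => /eqP.
Qed.

Lemma ipDl x y z : ip (x + y) z = ip x z + ip y z.
Proof. by case: Hip => lin _ _ _; rewrite -[x]scale1r lin mul1r scale1r. Qed.

Lemma ipZl a x z : ip (a *: x) z = a * ip x z.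
Proof. by case: Hip => lin _ _ _; rewrite -[a *: x]addr0 lin ip0l addr0. Qed.

Lemma ipNl x z : ip (- x) z = - ip x z.
Proof. by rewrite -scaleN1r ipZl mulN1r. Qed.

Lemma ipBl x y z : ip (x - y) z = ip x z - ip y z.
Proof. by rewrite ipDl ipNl. Qed.

Lemma ipC x y : ip y x = ((ip x y)^*)%C.
Proof. by case: Hip. Qed.

Lemma ip0r y : ip y 0 = 0.
Proof. by rewrite ipC ip0l conjc0. Qed.

Lemma ipDr x y z : ip z (x + y) = ip z x + ip z y.
Proof. by rewrite ipC ipDl rmorphD /= -!ipC. Qed.

Lemma ipZr a x z : ip z (a *: x) = (a^*)%C * ip z x.
Proof. by rewrite ipC ipZl rmorphM /= -ipC. Qed.

Lemma ipNr x z : ip z (- x) = - ip z x.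
Proof. by rewrite ipC ipNl rmorphN /= -ipC. Qed.

Lemma ipBr x y z : ip z (x - y) = ip z x - ip z y.
Proof. by rewrite ipDr ipNr. Qed.

Lemma Im_ipxx x : complex.Im (ip x x) = 0.
Proof.
have := ipC x x; case: (ip x x) => a b /= [] /eqP.
by rewrite -subr_eq0 opprK -mulr2n mulrn_eq0 /= => /eqP.
Qed.

Lemma ipxx x : ip x x = ((q x)%:C)%C.
Proof. by have := Im_ipxx x; case: (ip x x) => a b /= ->. Qed.

Lemma q_ge0 x : 0 <= q x.
Proof. by case: Hip. Qed.

Lemma nn_ge0 x : 0 <= nn x.
Proof. exact: sqrtr_ge0. Qed.

Lemma nn_sqr x : nn x ^+ 2 = q x.
Proof. by rewrite /ipnorm sqr_sqrtr // q_ge0. Qed.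

Lemma q0_eq x : q x = 0 -> x = 0.
Proof. by case: Hip => _ _ _ d h; apply: d; rewrite ipxx h. Qed.

Lemma nn0_eq x : nn x = 0 -> x = 0.
Proof. by move=> h; apply: q0_eq; rewrite -nn_sqr h expr0n. Qed.

Lemma ip_ext u v : (forall x, ip x u = ip x v) -> u = v.
Proof.
move=> h; apply/eqP; rewrite -subr_eq0; apply/eqP/q0_eq.
by rewrite ipBr h subrr.
Qed.


Lemma qD x y : q (x + y) = q x + q y + 2 * complex.Re (ip x y).
Proof.
rewrite !ipDl !ipDr [ip y x]ipC.
case: (ip x x) => a b; case: (ip y y) => c d; case: (ip x y) => e f /=.
ring.
Qed.

Lemma normc_def2 (a : R[i]) : Normc.normc a = Num.sqrt (complex.Re a ^+ 2 + complex.Im a ^+ 2).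
Proof. by case: a. Qed.

Lemma qZ a x : q (a *: x) = (complex.Re a ^+ 2 + complex.Im a ^+ 2) * q x.
Proof.
rewrite ipZl ipZr ipxx.
case: a => a b /=; ring.
Qed.

Lemma nnZ a x : nn (a *: x) = Normc.normc a * nn x.
Proof.
by rewrite /ipnorm qZ sqrtrM ?normc_def2 // addr_ge0 // sqr_ge0.
Qed.

Lemma nnN x : nn (- x) = nn x.
Proof.
rewrite -scaleN1r nnZ normc_def2 /=.
by rewrite oppr0 expr0n /= addr0 sqrrN expr1n sqrtr1 mul1r.
Qed.

Lemma nn_sym x y : nn (x - y) = nn (y - x).
Proof. by rewrite -nnN opprB. Qed.

Lemma nn0 : nn 0 = 0.
Proof. by rewrite /ipnorm ip0l /= sqrtr0. Qed.

Lemma CS_Re x y : complex.Re (ip x y) <= nn x * nn y.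
Proof.
set g := complex.Re (ip x y).
have key : forall s : R, 0 <= q x + 2 * s * g + s ^+ 2 * q y.
  move=> s; have := q_ge0 (x + ((s%:C)%C) *: y).
  rewrite qD qZ ipZr /=.
  rewrite /g; case: (ip x y) => e f /= h. rewrite ?expr0n /= ?addr0 ?oppr0 ?mul0r ?mulr0 ?subr0 ?addr0 in h. nra.
have [qy0|qy0] := eqVneq (q y) 0.
  by rewrite /g (@q0_eq y qy0) ip0r nn0 mulr0.
have qyp : 0 < q y by rewrite lt_def qy0 q_ge0.
have h := key (- g / q y).
have h2 : g ^+ 2 <= q x * q y.
  have e : q x + 2 * (- g / q y) * g + (- g / q y) ^+ 2 * q y = q x - g ^+ 2 / q y.
    by field; rewrite ?qy0.
  rewrite e subr_ge0 ler_pdivrMr // in h.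
rewrite -!nn_sqr in h2.
rewrite -exprMn in h2.
have P0 := mulr_ge0 (nn_ge0 x) (nn_ge0 y).
apply: (le_trans (ler_norm g)).
rewrite -sqrtr_sqr -[X in _ <= X]ger0_norm // -sqrtr_sqr ler_sqrt //.
exact: sqr_ge0.
Qed.

Lemma CS x y : Normc.normc (ip x y) <= nn x * nn y.
Proof.
have h := CS_Re x (ip x y *: y).
rewrite ipZr nnZ in h.
have hk : 0 <= Normc.normc (ip x y) by rewrite normc_def2 sqrtr_ge0.
have e : complex.Re ((ip x y)^*%C * ip x y) = Normc.normc (ip x y) ^+ 2.
  rewrite normc_def2 sqr_sqrtr ?addr_ge0 ?sqr_ge0 //.
  by case: (ip x y) => a b /=; ring.
rewrite e in h.
have P0 := mulr_ge0 (nn_ge0 x) (nn_ge0 y).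
move: hk h; set k := Normc.normc _ => hk h.
have [k0|kn0] := eqVneq k 0; first by rewrite k0.
have kp : 0 < k by rewrite lt_def kn0 hk.
by rewrite expr2 mulrCA ler_pM2l // in h.
Qed.

Lemma nnD x y : nn (x + y) <= nn x + nn y.
Proof.
have h : nn (x + y) ^+ 2 <= (nn x + nn y) ^+ 2.
  rewrite nn_sqr qD -!nn_sqr; have := CS_Re x y; nra.
have := nn_ge0 (x + y); have := nn_ge0 x; have := nn_ge0 y; nra.
Qed.



Lemma archi_inv (c : R) : 0 < c -> exists n0 : nat, forall n : nat, (n0 <= n)%N -> (n.+1%:R)^-1 < c.
Proof.
move=> c0; exists (Num.Def.truncn c^-1) => n hn.
rewrite invf_plt ?posrE ?ltr0Sn //.
apply: lt_le_trans (truncnS_gt _) _.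
by rewrite ler_nat ltnS.
Qed.

Lemma qN x : q (- x) = q x.
Proof. by rewrite -!nn_sqr nnN. Qed.

Lemma parallelogram a b : q (a - b) + q (a + b) = 2 * q a + 2 * q b.
Proof. rewrite qD qD qN ipNr /=; case: (ip a b) => e f /=; ring. Qed.

Lemma qhalf a : q (((2^-1 : R)%:C)%C *: a) = 4^-1 * q a.
Proof. rewrite qZ /= expr0n /= addr0; congr (_ * _).
by rewrite exprVn expr2 -natrM. Qed.

Lemma nn_le1 x : nn x <= 1 + q x.
Proof. rewrite -nn_sqr; have := nn_ge0 x; nra. Qed.


Lemma conjcM (x y : R[i]) : ((x * y)^*)%C = ((x^*)%C * (y^*)%C).
Proof. exact: rmorphM. Qed.

Lemma normc_ge0 (c : R[i]) : 0 <= Normc.normc c.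
Proof. by rewrite normc_def2 sqrtr_ge0. Qed.

Lemma riesz (phi : V -> R[i]) (C : R) :
  ip_complete ip -> 0 <= C ->
  (forall a x y, phi (a *: x + y) = a * phi x + phi y) ->
  (forall x, Normc.normc (phi x) <= C * nn x) ->
  exists z, forall x, phi x = ip x z.
Proof.
move=> Hc C0 lin bnd.
have phi0 : phi 0 = 0.
  have := lin 1 0 0; rewrite scale1r addr0 mul1r => /eqP.
  by rewrite -subr_eq0 opprD addrA subrr add0r oppr_eq0 => /eqP.
have phiD x y : phi (x + y) = phi x + phi y.
  by rewrite -[x]scale1r lin mul1r scale1r.
have phiZ a x : phi (a *: x) = a * phi x.
  by rewrite -[a *: x]addr0 lin phi0 addr0.
have phiB x y : phi (x - y) = phi x - phi y.
  by rewrite -scaleN1r phiD phiZ mulN1r.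
have [allz|] := pselect (forall x, phi x = 0).
  by exists 0 => x; rewrite allz ip0r.
move=> /existsNP [x1 /eqP hx1].
pose e1 := (phi x1)^-1 *: x1.
have he1 : phi e1 = 1 by rewrite phiZ mulVf.
pose S : set R := fun r => exists y, phi y = 1 /\ r = q y.
have hlb : lbound S 0 by move=> r [y [_ ->]]; exact: q_ge0.
have hinf : has_inf S by split; [exists (q e1); exists e1 | exists 0].
pose d := inf S.
have dle : forall y, phi y = 1 -> d <= q y.
  by move=> y hy; apply: (ge_inf hinf.2); exists y.
have d0 : 0 <= d by apply: lb_le_inf => //; exact: hinf.1.
have hseq : forall n : nat, exists y, phi y = 1 /\ q y < d + (n.+1%:R)^-1.
  move=> n; have ep : 0 < (n.+1%:R : R)^-1 by rewrite invr_gt0 ltr0Sn.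
  have [r [y [hy ->]] hr] := inf_adherent ep hinf.
  by exists y.
have [u hu] := choice hseq.
have cb : forall n m, q (u n - u m) <= 2 * (n.+1%:R)^-1 + 2 * (m.+1%:R)^-1.
  move=> n m.
  pose mid := ((2^-1 : R)%:C)%C *: (u n + u m).
  have hmid : phi mid = 1.
    rewrite phiZ phiD (hu n).1 (hu m).1.
    by apply/eqP; rewrite eq_complex /=; apply/andP; split; apply/eqP; field.
  have := dle _ hmid; rewrite qhalf => h1.
  have := parallelogram (u n) (u m).
  have := (hu n).2; have := (hu m).2.
  move: h1; set a := q (u n - u m); set b := q (u n + u m).
  set i1 := (n.+1%:R)^-1; set i2 := (m.+1%:R)^-1.
  lra.
have cauchy : forall e : R, 0 < e -> exists n0 : nat, forall m n : nat,
    (n0 <= m)%N -> (n0 <= n)%N -> nn (u m - u n) < e.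
  move=> e e0.
  have e2 : 0 < e ^+ 2 / 4 by apply: divr_gt0; [exact: exprn_gt0|].
  have [n0 hn0] := archi_inv _ e2.
  exists n0 => m n hm hn.
  have h1 := hn0 _ hm; have h2 := hn0 _ hn.
  have h3 := cb m n.
  have h4 : nn (u m - u n) ^+ 2 < e ^+ 2 by rewrite nn_sqr; set i1 := (m.+1%:R)^-1 in h1 h3 *; set i2 := (n.+1%:R)^-1 in h2 h3 *; lra.
  have := nn_ge0 (u m - u n); move: h4; generalize (nn (u m - u n)) => w.
  move=> h4 h5; nra.
have [x0 hx0] := Hc u cauchy.
have phix0 : phi x0 = 1.
  have h : forall e, 0 < e -> Normc.normc (phi x0 - 1) <= 0 + e.
    move=> e e0.
    have dl0 : 0 < e / (C + 1) by apply: divr_gt0 => //; lra.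
    have [n0 hn0] := hx0 _ dl0.
    have h1 := hn0 _ (leqnn n0).
    rewrite -(hu n0).1 -phiB add0r.
    apply: (le_trans (bnd _)); rewrite nn_sym.
    apply: (le_trans (ler_wpM2l C0 (ltW h1))).
    rewrite mulrA ler_pdivrMr; last by lra.
    nra.
  move/ler_addgt0Pr: h => h.
  have : Normc.normc (phi x0 - 1) = 0 by apply/eqP; rewrite eq_le h normc_ge0.
  by move/Normc.eq0_normc/eqP; rewrite subr_eq0 => /eqP.
have qx0 : q x0 <= d.
  apply/ler_addgt0Pr => e e0.
  pose K := 6 + 2 * d.
  have K0 : 0 < K by rewrite /K; lra.
  pose dl := e / (K + e).
  have dl0 : 0 < dl by apply: divr_gt0 => //; lra.
  have dl1 : dl <= 1 by rewrite /dl ler_pdivrMr; lra.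
  have dlK : dl * K <= e.
    rewrite /dl mulrAC ler_pdivrMr; last by lra.
    nra.
  have [n1 hn1] := hx0 _ dl0.
  have [n2 hn2] := archi_inv _ dl0.
  pose n := maxn n1 n2.
  have h1 := hn1 n (leq_maxl _ _).
  have h2 := hn2 n (leq_maxr _ _).
  have [_ h3] := hu n.
  have h4 : nn x0 <= nn (u n) + nn (u n - x0).
    rewrite nn_sym; apply: le_trans (nnD _ _); by rewrite addrC subrK.
  have h5 := nn_le1 (u n).
  have h6 := nn_ge0 x0; have h7 := nn_ge0 (u n).
  rewrite -nn_sqr; rewrite -nn_sqr in h3 h5.
  move: h1 h2 h3 h4 h5 h6 h7.
  set i := (n.+1%:R)^-1; set A := nn x0; set B := nn (u n); set D := nn (u n - x0).
  move=> h1 h2 h3 h4 h5 h6 h7.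
  have h8 : A ^+ 2 <= (B + dl) ^+ 2.
    have : A <= B + dl by lra.
    nra.
  have h9 : B ^+ 2 < d + dl by lra.
  have h10 : B <= 1 + d + dl by lra.
  have h11 : dl * B <= dl * (1 + d + dl) by rewrite ler_wpM2l // ltW.
  have h12 : dl * dl <= dl * 1 by rewrite ler_wpM2l // ltW.
  move: dlK; rewrite /K => dlK.
  have e1' : (B + dl) ^+ 2 = B ^+ 2 + 2 * (dl * B) + dl * dl by ring.
  have e2' : dl * (1 + d + dl) = dl + dl * d + dl * dl by ring.
  have e3' : dl * (6 + 2 * d) = 6 * dl + 2 * (dl * d) by ring.
  rewrite e1' in h8; rewrite e2' in h11; rewrite e3' in dlK; rewrite mulr1 in h12.
  lra.
have orth : forall v, phi v = 0 -> ip x0 v = 0.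
  move=> v hv.
  pose s := (q v + 1)^-1.
  have qv0 := q_ge0 v.
  have s0 : 0 < s by rewrite /s invr_gt0; lra.
  have ss : s * (q v + 1) = 1 by rewrite /s mulVf //; lra.
  pose t := - ((s%:C)%C * ip x0 v).
  have ht : phi (x0 + t *: v) = 1 by rewrite phiD phiZ hv mulr0 addr0.
  have := le_trans qx0 (dle _ ht).
  rewrite qD qZ ipZr.
  move: ss s0; rewrite /t; generalize s => s' ss s0.
  case: (ip x0 v) => a b /= h.
  have hm : a ^+ 2 + b ^+ 2 = 0.
    have : 0 <= s' * (a ^+ 2 + b ^+ 2) * (s' * q v - 2).
      nra.
    have hsq : s' * q v - 2 < 0.
      have -> : s' * q v = 1 - s' by rewrite -ss; ring.
      lra.
    rewrite nmulr_lge0 // pmulr_rle0 // => hm.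
    by apply/eqP; rewrite eq_le hm addr_ge0 ?sqr_ge0.
  move/eqP: hm; rewrite paddr_eq0 ?sqr_ge0 // !sqrf_eq0 => /andP[/eqP -> /eqP ->].
  by [].
have qn0 : q x0 != 0.
  apply/eqP => /q0_eq hx; move: phix0; rewrite hx phi0 => /eqP.
  by rewrite eq_sym oner_eq0.
exists ((((q x0)^-1)%:C)%C *: x0); move=> x.
have hv : phi (x - phi x *: x0) = 0 by rewrite phiB phiZ phix0 mulr1 subrr.
have h : ip x0 x = (phi x)^*%C * ((q x0)%:C)%C.
  apply/eqP; rewrite -subr_eq0 -(orth _ hv) ipBr ipZr.
  by rewrite [ip x0 x0]ipxx.
have h2 : ip x x0 = phi x * ((q x0)%:C)%C.
  by rewrite ipC h conjcM conjcK conjc_real.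
rewrite ipZr h2 conjc_real.
by rewrite mulrCA -rmorphM /= mulVf // rmorph1 mulr1.
Qed.

Section Ops.
Implicit Types X Y : V -> V.

Lemma lin0 X : is_linear_op X -> X 0 = 0.
Proof.
move=> lin; have := lin 1 0 0; rewrite scale1r addr0 scale1r => /eqP.
by rewrite -subr_eq0 opprD addrA subrr add0r oppr_eq0 => /eqP.
Qed.

Lemma linD X : is_linear_op X -> forall x y, X (x + y) = X x + X y.
Proof. by move=> lin x y; rewrite -[x]scale1r lin !scale1r. Qed.

Lemma linZ X : is_linear_op X -> forall a x, X (a *: x) = a *: X x.
Proof. by move=> lin a x; rewrite -[a *: x]addr0 lin lin0 // addr0. Qed.

Lemma linN X : is_linear_op X -> forall x, X (- x) = - X x.
Proof. by move=> lin x; rewrite -scaleN1r linZ // scaleN1r. Qed.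

Lemma bnd_pos X : is_bounded_op ip X ->
  exists M, 0 <= M /\ forall x, nn (X x) <= M * nn x.
Proof.
move=> [_ [M hM]]; exists `|M|; split => // x.
apply: le_trans (hM x) _; apply: ler_wpM2r; [exact: nn_ge0 | exact: ler_norm].
Qed.

Lemma adj_exists X : ip_complete ip -> is_bounded_op ip X -> exists S, is_adjoint ip X S.
Proof.
move=> Hc hX; have [M [M0 hM]] := @bnd_pos X hX.
case: hX => lin _.
have h : forall y, exists z, forall x, ip (X x) y = ip x z.
  move=> y; apply: (@riesz (fun x => ip (X x) y) (M * nn y)) => //.
  - by apply: mulr_ge0 => //; exact: nn_ge0.
  - by move=> a x x'; rewrite lin ipDl ipZl.
  - move=> x; apply: le_trans (CS _ _) _.
    rewrite mulrAC; apply: ler_wpM2r; [exact: nn_ge0 | exact: hM].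
have [S hS] := choice h.
by exists S => x y; rewrite hS.
Qed.

Lemma adj_unique X S1 S2 : is_adjoint ip X S1 -> is_adjoint ip X S2 -> S1 = S2.
Proof.
move=> h1 h2; apply: funext => y; apply: ip_ext => x.
by rewrite -h1 -h2.
Qed.

Lemma adjP X : ip_complete ip -> is_bounded_op ip X -> is_adjoint ip X (adj ip X).
Proof.
move=> Hc hX; rewrite /adj; apply: epsilon_spec; exact: adj_exists.
Qed.

Lemma adj_eq X S : ip_complete ip -> is_bounded_op ip X -> is_adjoint ip X S -> adj ip X = S.
Proof. by move=> Hc hX hS; apply: adj_unique (@adjP X Hc hX) hS. Qed.

Lemma adjoint_linear X S : is_adjoint ip X S -> is_linear_op S.
Proof.
move=> hS a x y; apply: ip_ext => z.
by rewrite -hS ipDr ipZr ipDr ipZr -!hS.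
Qed.

Lemma adjoint_bounded X S : is_bounded_op ip X -> is_adjoint ip X S -> is_bounded_op ip S.
Proof.
move=> hX hS; split; first exact: (@adjoint_linear X S hS).
have [M [M0 hM]] := @bnd_pos X hX.
exists M => y.
have h : nn (S y) ^+ 2 <= M * nn (S y) * nn y.
  rewrite nn_sqr -hS; apply: le_trans (CS_Re _ _) _.
  apply: ler_wpM2r; [exact: nn_ge0 | exact: hM].
have h0 := nn_ge0 (S y); have h1 := nn_ge0 y.
move: h h0; set k := nn (S y) => h h0.
have [k0|kn0] := eqVneq k 0; first by rewrite k0 mulr_ge0.
have kp : 0 < k by rewrite lt_def kn0 h0.
by rewrite expr2 [M * k]mulrC -mulrA ler_pM2l // in h.
Qed.

Lemma bounded_opZ c X : is_bounded_op ip X -> is_bounded_op ip (opZ c X).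
Proof.
move=> hX; have [M [M0 hM]] := @bnd_pos X hX; case: hX => lin _.
split.
  by move=> a x y; rewrite /opZ lin scalerDr !scalerA mulrC.
exists (Normc.normc c * M) => x; rewrite /opZ nnZ -mulrA.
by apply: ler_wpM2l; [exact: normc_ge0 | exact: hM].
Qed.

Lemma bounded_opD X Y : is_bounded_op ip X -> is_bounded_op ip Y -> is_bounded_op ip (opD X Y).
Proof.
move=> hX hY; have [M [M0 hM]] := @bnd_pos X hX; have [M' [M0' hM']] := @bnd_pos Y hY.
case: hX => lin _; case: hY => lin' _.
split.
  move=> a x y; rewrite /opD lin lin' scalerDr.
  by rewrite addrACA.
exists (M + M') => x; rewrite /opD mulrDl.
apply: le_trans (nnD _ _) _; exact: lerD.
Qed.

Lemma bounded_opM X Y : is_bounded_op ip X -> is_bounded_op ip Y -> is_bounded_op ip (opM X Y).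
Proof.
move=> hX hY; have [M [M0 hM]] := @bnd_pos X hX; have [M' [M0' hM']] := @bnd_pos Y hY.
case: hX => lin _; case: hY => lin' _.
split; first by move=> a x y; rewrite /opM lin' lin.
exists (M * M') => x; rewrite /opM -mulrA.
apply: le_trans (hM _) _; exact: ler_wpM2l.
Qed.

Hypothesis Hc : ip_complete ip.

Lemma bounded_adj X : is_bounded_op ip X -> is_bounded_op ip (adj ip X).
Proof. move=> hX; exact: adjoint_bounded hX (@adjP X Hc hX). Qed.

Lemma adj_opZ c X : is_bounded_op ip X -> adj ip (opZ c X) = opZ (c^*)%C (adj ip X).
Proof.
move=> hX; apply: adj_eq => //; first exact: bounded_opZ.
move=> x y; rewrite /opZ ipZl ipZr conjcK (@adjP X Hc hX).
by [].
Qed.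

End Ops.

Lemma zid (Z : zmodType) (a b c d : Z) : (a + b + (c + d)) - (a - b - (c - d)) = (b + c) *+ 2.
Proof.
have e1 : a + b + (c + d) = (a + d) + (b + c).
  by rewrite addrACA (addrC b d) addrACA (addrC c b).
have e2 : a - b - (c - d) = (a + d) - (b + c).
  rewrite opprB [d - c]addrC addrA [in RHS]opprD [in RHS]addrA.
  by rewrite [in LHS]addrAC [in LHS](addrAC a).
by rewrite e1 e2 opprB addrC -addrA (addrA (- _)) addNr add0r mulr2n.
Qed.

Lemma normc_nat2 : Normc.normc (2%:R : R[i]) = 2.
Proof.
rewrite /Normc.normc /= addr0 expr0n /= addr0 sqrtr_sqr ger0_norm //.
exact: addr_ge0 ler01 ler01.
Qed.

Lemma normc_half : Normc.normc ((2%:R : R[i])^-1) = 2^-1.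
Proof. by rewrite Normc.normcV normc_nat2. Qed.

Lemma normc_expi (t : R) : Normc.normc (expi t) = 1.
Proof. by rewrite /expi /Normc.normc cos2Dsin2 sqrtr1. Qed.

Section Main.
Hypothesis Hc : ip_complete ip.
Variable N : (V -> V) -> R.
Hypothesis HN : is_op_norm ip N.
Hypothesis HAl : is_algebra_norm ip N.
Hypothesis HSa : is_selfadjoint_norm ip N.

Lemma N_ge0 X : is_bounded_op ip X -> 0 <= N X.
Proof. by case: HN => h _ _ _; apply: h. Qed.

Lemma NZ c X : is_bounded_op ip X -> N (opZ c X) = Normc.normc c * N X.
Proof. by case: HN => _ _ h _; apply: h. Qed.

Lemma ND X Y : is_bounded_op ip X -> is_bounded_op ip Y -> N (opD X Y) <= N X + N Y.
Proof. by case: HN => _ _ _ h; apply: h. Qed.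

Lemma ReOp_le X : is_bounded_op ip X -> N (ReOp ip X) <= N X.
Proof.
move=> hX; have hXs := bounded_adj Hc _ hX.
rewrite /ReOp NZ; last exact: bounded_opD.
rewrite normc_half.
have := ND _ _ hX hXs; rewrite HSa //.
move=> h; have := N_ge0 _ hX; lra.
Qed.

Lemma sum_identity T : is_bounded_op ip T ->
  opD (opM (adj ip T) T) (opM T (adj ip T)) =
  opZ 2%:R (opD (opM (ReOp ip T) (ReOp ip T)) (opM (ImOp ip T) (ImOp ip T))).
Proof.
move=> hT; have hTs := bounded_adj Hc _ hT.
case: (hT) => linT _; case: (hTs) => linTs _.
move: linTs; set Ts := adj ip T => linTs.
apply: funext => x; rewrite /opD /opM /opZ /ReOp /ImOp /opD /opZ -/Ts.
rewrite !(linZ _ linT) !(linZ _ linTs) !(linD _ linT) !(linD _ linTs) !(linZ _ linT) !(linZ _ linTs).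
set P := T (T x); set Q := T (Ts x); set S1 := Ts (T x); set S2 := Ts (Ts x).
set h := (2%:R : R[i])^-1; set k := (2%:R * 'i%C : R[i])^-1.
have two0 : (2%:R : R[i]) != 0 by rewrite pnatr_eq0.
have ii : 'i%C * 'i%C = -1 :> R[i] by rewrite -expr2 sqr_i.
have kk : k * k = - (h * h).
  rewrite /k /h -invfM mulrACA ii mulrN1 invrN -invfM //.
have eAA : h *: (h *: (P + Q) + h *: (S1 + S2)) = (h * h) *: (P + Q + (S1 + S2)).
  by rewrite -scalerDr scalerA.
have eBB : k *: (k *: (P + -1 *: Q) + -1 *: (k *: (S1 + -1 *: S2))) = (k * k) *: (P - Q - (S1 - S2)).
  by rewrite !scaleN1r -scalerN -scalerDr scalerA.
rewrite eAA eBB kk scaleNr -scalerBr zid.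
rewrite -[(Q + S1) *+ 2]scaler_nat !scalerA.
have -> : 2%:R * (h * h) * 2%:R = 1 :> R[i] by rewrite /h; field.
by rewrite scale1r addrC.
Qed.

Lemma expi_mpihalf : expi (- (pi / 2) : R) = - 'i%C.
Proof.
rewrite /expi cosN sinN cos_pihalf sin_pihalf.
by apply/eqP; rewrite eq_complex /= oppr0 !eqxx.
Qed.

Lemma conj_expi_mpihalf : ((expi (- (pi / 2) : R))^*)%C = 'i%C.
Proof.
rewrite /expi cosN sinN cos_pihalf sin_pihalf.
by apply/eqP; rewrite eq_complex /= opprK !eqxx.
Qed.

Lemma ImOp_eq T : is_bounded_op ip T ->
  ReOp ip (opZ (expi (- (pi / 2))) T) = ImOp ip T.
Proof.
move=> hT; rewrite /ReOp adj_opZ // /ImOp.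
apply: funext => x; rewrite /opD /opZ conj_expi_mpihalf expi_mpihalf.
rewrite !scalerDr !scalerA.
have iV : ('i%C)^-1 = - 'i%C :> R[i] by rewrite complexiE invCi.
have e : (2%:R * 'i%C : R[i])^-1 = (2%:R)^-1 * - 'i%C by rewrite invfM iV.
by rewrite e mulrN !mulNr mulrN1 opprK.
Qed.

Lemma main_ineq T : is_bounded_op ip T ->
    (16%:R)^-1 * N (opD (opM (adj ip T) T) (opM T (adj ip T)))
      + (2%:R)^-1 * wN ip N T * `|N (ReOp ip T) - N (ImOp ip T)|
    <= wN ip N T ^+ 2.
Proof.
move=> hT; have hTs := bounded_adj Hc _ hT.
have hA : is_bounded_op ip (ReOp ip T).
  by apply: bounded_opZ; apply: bounded_opD.
have hB : is_bounded_op ip (ImOp ip T).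
  by apply: bounded_opZ; apply: bounded_opD => //; apply: bounded_opZ.
pose E := [set N (ReOp ip (opZ (expi t) T)) | t in [set: R]]%classic.
have hE : has_sup E.
  split; first by exists (N (ReOp ip (opZ (expi 0) T))); exists 0.
  exists (N T) => r [t _ <-].
  apply: le_trans (ReOp_le _ (bounded_opZ _ _ hT)) _.
  by rewrite NZ // normc_expi mul1r.
have wub := sup_upper_bound hE.
have ha : N (ReOp ip T) <= wN ip N T.
  apply: wub; exists 0 => //.
  congr (N (ReOp ip _)); apply: funext => x.
  by rewrite /opZ /expi cos0 sin0 scale1r.
have hb : N (ImOp ip T) <= wN ip N T.
  apply: wub; exists (- (pi / 2)) => //.
  by rewrite ImOp_eq.
have hsum : N (opD (opM (adj ip T) T) (opM T (adj ip T))) <=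
    2 * (N (ReOp ip T) ^+ 2 + N (ImOp ip T) ^+ 2).
  rewrite sum_identity // NZ; last by apply: bounded_opD; apply: bounded_opM.
  rewrite normc_nat2 ler_pM2l //.
  apply: le_trans (ND _ _ (bounded_opM _ _ hA hA) (bounded_opM _ _ hB hB)) _.
  by apply: lerD; rewrite expr2; apply: HAl.
have a0 := N_ge0 _ hA; have b0 := N_ge0 _ hB.
move: ha hb hsum a0 b0.
set a := N (ReOp ip T); set b := N (ImOp ip T); set w := wN ip N T.
set c := N (opD _ _).
move=> ha hb hsum a0 b0.
have [hab|hab] := leP b a.
  rewrite ger0_norm ?subr_ge0 //.
  nra.
rewrite ltr0_norm ?subr_lt0 //.
nra.
Qed.

End Main.

End IP.

Theorem corollary2p17 (R : realType) (V : lmodType R[i]) (ip : V -> V -> R[i])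
  (N : (V -> V) -> R) :
  is_hilbert ip ->
  is_op_norm ip N -> is_algebra_norm ip N -> is_selfadjoint_norm ip N ->
  forall T : V -> V, is_bounded_op ip T ->
    (16%:R)^-1 * N (opD (opM (adj ip T) T) (opM T (adj ip T)))
      + (2%:R)^-1 * wN ip N T * `|N (ReOp ip T) - N (ImOp ip T)|
    <= wN ip N T ^+ 2.
Proof.
move=> [Hip Hc] HN HAl HSa T hT.
exact: (@main_ineq R V ip Hip Hc N HN HAl HSa T hT).
Qed.
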